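(* Let $p=(p_1,p_2,p_3,p_4)$ be an ordered quadruple of distinct points of $\partial\mathbf H^2_{\mathbb C}$ and let $(X_1,X_2,A)=\bigl(X(p_1,p_2,p_3,p_4),X(p_1,p_3,p_2,p_4),\mathbb A(p_1,p_2,p_3)\bigr)$. Then some triple $(p_i,p_j,p_k)$, $i<j<k$, lies on a chain if and only if $(X_1,X_2,A)$ belongs to at least one of the sets $\mathbb S_{123},\mathbb S_{124},\mathbb S_{134},\mathbb S_{234}$. Moreover, all four points lie on a common chain if and only if $(X_1,X_2,A)$ belongs to at least two of these sets.
   Context: $\mathbb C^{2,1}$ is $\mathbb C^3$ with Hermitian form $\langle Z,W\rangle=z_1\overline{w}_3+z_2\overline{w}_2+z_3\overline{w}_1$; $\partial\mathbf H^2_{\mathbb C}$ is the set of null lines in $\mathbb P\mathbb C^2$. A chain is the boundary of a complex geodesic (intersection of $\partial\mathbf H^2_{\mathbb C}$ with the projectivization of a 2-dimensional complex subspace of signature $(1,1)$). With null lifts $P_i$: $X(p_1,p_2,p_3,p_4)=\dfrac{\langle P_3,P_1\rangle\langle P_4,P_2\rangle}{\langle P_4,P_1\rangle\langle P_3,P_2\rangle}$, $\mathbb A(p_1,p_2,p_3)=\arg\bigl(-\langle P_1,P_2\rangle\langle P_2,P_3\rangle\langle P_3,P_1\rangle\bigr)$. The Cartan varieties in $\mathbb C^2\times\mathbb R$ are $\mathbb S_{123}=\{\mathrm{Re}(e^{iA})=0\}$, $\mathbb S_{124}=\{\mathrm{Re}(\overline{X}_1e^{iA})=0\}$, $\mathbb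 S_{134}=\{\mathrm{Re}(\overline{X}_2e^{-iA})=0\}$, $\mathbb S_{234}=\{\mathrm{Re}(X_1\overline{X}_2e^{-iA})=0\}$. *)

(* Defs.v *)
From HB Require Import structures.
From mathcomp Require Import all_boot all_order all_algebra.
From mathcomp Require Import complex.
From mathcomp Require Import reals trigo.
Set Implicit Arguments. Unset Strict Implicit. Unset Printing Implicit Defensive.
Import Order.TTheory GRing.Theory Num.Theory ComplexField.
Local Open Scope ring_scope.
Local Open Scope complex_scope.

Section Defs.
Variable R : realType.
Notation C := (R[i]).

(* vectors of C^{2,1} = C^3 *)
Definition vec3 := (C * C * C)%type.
Definition v1 (Z : vec3) : C := Z.1.1.
Definition v2 (Z : vec3) : C := Z.1.2.
Definition v3 (Z : vec3) : C := Z.2.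

Definition vscale (c : C) (Z : vec3) : vec3 := (c * v1 Z, c * v2 Z, c * v3 Z).
Definition vadd (Z W : vec3) : vec3 := (v1 Z + v1 W, v2 Z + v2 W, v3 Z + v3 W).

Definition herm (Z W : vec3) : C :=
  v1 Z * (v3 W)^* + v2 Z * (v2 W)^* + v3 Z * (v1 W)^*.

(* Z is a null lift of a point of the boundary of H^2_C *)
Definition null_lift (Z : vec3) : Prop := Z <> (0, 0, 0) /\ herm Z Z = 0.

(* the points represented by the (nonzero) lifts Z, W are distinct:
   Z, W span distinct complex lines *)
Definition distinct_pts (Z W : vec3) : Prop := ~ exists c : C, Z = vscale c W.

(* a chain: boundary of the complex geodesic given by a 2-dimensional complex
   subspace of signature (1,1), i.e. spanned by an orthogonal pair e1, e2
   with <e1,e1> > 0 and <e2,e2> < 0.  A boundary point lies on the chain iff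
   its lift lies in the subspace. *)
Definition sig11_basis (e1 e2 : vec3) : Prop :=
  herm e1 e2 = 0 /\ 0 < herm e1 e1 /\ herm e2 e2 < 0.
Definition in_span (e1 e2 Z : vec3) : Prop :=
  exists a b : C, Z = vadd (vscale a e1) (vscale b e2).
Definition on_chain3 (P Q S : vec3) : Prop :=
  exists e1 e2, sig11_basis e1 e2 /\ in_span e1 e2 P /\ in_span e1 e2 Q /\ in_span e1 e2 S.
Definition on_chain4 (P Q S T : vec3) : Prop :=
  exists e1 e2, sig11_basis e1 e2 /\ in_span e1 e2 P /\ in_span e1 e2 Q /\
    in_span e1 e2 S /\ in_span e1 e2 T.

Definition crossX (P1 P2 P3 P4 : vec3) : C :=
  herm P3 P1 * herm P4 P2 / (herm P4 P1 * herm P3 P2).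

Definition expi (t : R) : C := (cos t +i* sin t).

Definition is_arg (w : C) (A : R) : Prop := w = `|w| * expi A.

Definition cartanA_is (P1 P2 P3 : vec3) (A : R) : Prop :=
  is_arg (- (herm P1 P2 * herm P2 P3 * herm P3 P1)) A.

Definition S123 (X1 X2 : C) (A : R) : Prop := Re (expi A) = 0.
Definition S124 (X1 X2 : C) (A : R) : Prop := Re (X1^* * expi A) = 0.
Definition S134 (X1 X2 : C) (A : R) : Prop := Re (X2^* * expi (- A)) = 0.
Definition S234 (X1 X2 : C) (A : R) : Prop := Re (X1 * X2^* * expi (- A)) = 0.

End Defs.

(* Main.v *)
Require Import Defs.
From HB Require Import structures.
From mathcomp Require Import all_boot all_order all_algebra.
From mathcomp Require Import complex.
From mathcomp Require Import reals trigo.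
From mathcomp Require Import ring.
From Stdlib Require Import Classical.
Set Implicit Arguments. Unset Strict Implicit.
Import Order.TTheory GRing.Theory Num.Theory ComplexField.
Local Open Scope ring_scope.
Local Open Scope complex_scope.

Section Gen.
Variable K : numClosedFieldType.
Lemma conjM' (x y : K) : (x * y)^*%R = x^*%R * y^*%R. Proof. by rewrite rmorphM. Qed.
Lemma conjD' (x y : K) : (x + y)^*%R = x^*%R + y^*%R. Proof. by rewrite rmorphD. Qed.
Lemma conjB' (x y : K) : (x - y)^*%R = x^*%R - y^*%R. Proof. by rewrite rmorphB. Qed.
Lemma conjN' (x : K) : (- x)^*%R = - x^*%R. Proof. by rewrite rmorphN. Qed.
Lemma conjV' (x : K) : (x^-1)^*%R = (x^*%R)^-1. Proof. by rewrite fmorphV. Qed.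
Lemma conjK' (x : K) : (x^*%R)^*%R = x. Proof. by rewrite conjCK. Qed.
End Gen.

Section S.
Variable R : realType.
Notation C := (R[i]).
Implicit Types P Q S Z W X Y : vec3 R.

Definition det3 P Q S : C :=
  v1 P * (v2 Q * v3 S - v3 Q * v2 S) - v2 P * (v1 Q * v3 S - v3 Q * v1 S)
  + v3 P * (v1 Q * v2 S - v2 Q * v1 S).

Definition gram P Q S : C :=
  herm P P * (herm Q Q * herm S S - herm Q S * herm S Q)
  - herm P Q * (herm Q P * herm S S - herm Q S * herm S P)
  + herm P S * (herm Q P * herm S Q - herm Q Q * herm S P).

Lemma vec_eq Z W : v1 Z = v1 W -> v2 Z = v2 W -> v3 Z = v3 W -> Z = W.
Proof.
by case: Z => [[? ?] ?]; case: W => [[? ?] ?]; rewrite /v1 /v2 /v3 /= => -> -> ->.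
Qed.

Lemma gramE P Q S : gram P Q S = - (det3 P Q S * (det3 P Q S)^*%R).
Proof.
rewrite /gram /det3 /herm !(rmorphB, rmorphD, rmorphM) /=; ring.
Qed.

Lemma hermC P Q : herm Q P = (herm P Q)^*%R.
Proof. rewrite /herm !(conjD', conjM', conjK'); ring. Qed.

Lemma herm_addl X Y Z : herm (vadd X Y) Z = herm X Z + herm Y Z.
Proof. rewrite /herm /vadd /v1 /v2 /v3 /=; ring. Qed.
Lemma herm_addr X Y Z : herm Z (vadd X Y) = herm Z X + herm Z Y.
Proof. rewrite /herm /vadd /v1 /v2 /v3 /= !conjD'; ring. Qed.
Lemma herm_scalel c X Z : herm (vscale c X) Z = c * herm X Z.
Proof. rewrite /herm /vscale /v1 /v2 /v3 /=; ring. Qed.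
Lemma herm_scaler c X Z : herm Z (vscale c X) = c^*%R * herm Z X.
Proof. rewrite /herm /vscale /v1 /v2 /v3 /= !conjM'; ring. Qed.

Lemma det_swap23 P Q S : det3 P S Q = - det3 P Q S.
Proof. rewrite /det3; ring. Qed.
Lemma det_swap12 P Q S : det3 Q P S = - det3 P Q S.
Proof. rewrite /det3; ring. Qed.
Lemma det_cyc P Q S : det3 Q S P = det3 P Q S.
Proof. rewrite /det3; ring. Qed.

Lemma det_span (e1 e2 P Q S : vec3 R) :
  in_span e1 e2 P -> in_span e1 e2 Q -> in_span e1 e2 S -> det3 P Q S = 0.
Proof.
move=> [a1 [b1 ->]] [a2 [b2 ->]] [a3 [b3 ->]].
rewrite /det3 /vadd /vscale /v1 /v2 /v3 /=; ring.
Qed.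

Lemma mulfI' (a x y : C) : a != 0 -> a * x = a * y -> x = y.
Proof. by move=> a0; apply: mulfI. Qed.
Arguments mulfI' {a x y}.

Lemma indep Z W : Z <> (0,0,0) -> (forall S, det3 Z W S = 0) ->
  exists c, W = vscale c Z.
Proof.
move=> Z0 H.
have h1 := H (1,0,0); have h2 := H (0,1,0); have h3 := H (0,0,1).
clear H; move: h1 h2 h3; rewrite /det3 /v1 /v2 /v3 /=.
case: Z Z0 => [[z1 z2] z3] Z0; case: W => [[w1 w2] w3] /= h1 h2 h3.
have e1 : z2 * w3 = z3 * w2.
  by apply/eqP; rewrite -subr_eq0; apply/eqP; rewrite -h1; ring.
have e2 : z1 * w3 = z3 * w1.
  by apply/eqP; rewrite -subr_eq0; apply/eqP; rewrite -[RHS]oppr0 -h2; ring.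
have e3 : z1 * w2 = z2 * w1.
  by apply/eqP; rewrite -subr_eq0; apply/eqP; rewrite -h3; ring.
case: (eqVneq z1 0) => [z10|z1nz].
  case: (eqVneq z2 0) => [z20|z2nz].
    case: (eqVneq z3 0) => [z30|z3nz].
      by exfalso; apply: Z0; rewrite z10 z20 z30.
    exists (w3 / z3); apply: vec_eq; rewrite /vscale /v1 /v2 /v3 /=.
    - apply: (mulfI' z3nz); rewrite -e2 z10; (field; done).
    - apply: (mulfI' z3nz); rewrite -e1 z20; (field; done).
    - (field; done).
  exists (w2 / z2); apply: vec_eq; rewrite /vscale /v1 /v2 /v3 /=.
  - apply: (mulfI' z2nz); rewrite -e3 z10; (field; done).
  - (field; done).
  - apply: (mulfI' z2nz); rewrite e1; (field; done).
exists (w1 / z1); apply: vec_eq; rewrite /vscale /v1 /v2 /v3 /=.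
- (field; done).
- apply: (mulfI' z1nz); rewrite e3; (field; done).
- apply: (mulfI' z1nz); rewrite e2; (field; done).
Qed.
End S.

Section S2.
Variable R : realType.
Notation C := (R[i]).
Implicit Types P Q S Z W X Y : vec3 R.

Lemma exists_det Z W : Z <> (0,0,0) -> distinct_pts W Z ->
  exists S, det3 Z W S != 0.
Proof.
move=> Z0 hd.
have h : ~ (forall S, det3 Z W S = 0) by move=> h; apply: hd; exact: indep.
apply: NNPP => nex; apply: h => S; apply: NNPP => hS; apply: nex.
by exists S; apply/eqP.
Qed.

Lemma herm_neq0 P Q : null_lift P -> null_lift Q -> distinct_pts P Q ->
  herm P Q != 0.
Proof.
move=> [P0 hP] [Q0 hQ] hd; apply/eqP => h0.
have [S hS] := exists_det Q0 hd.
move/eqP: hS; apply.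
have : gram Q P S = 0.
  rewrite /gram hP hQ (hermC P Q) h0 rmorph0; ring.
by rewrite gramE => /eqP; rewrite oppr_eq0 mulf_eq0 conjC_eq0 orbb => /eqP.
Qed.

Lemma ReE0 (z : C) : 'Re z = 0 <-> z + z^*%R = 0.
Proof.
rewrite ReE; split => [/eqP| ->]; last by rewrite mul0r.
by rewrite mulf_eq0 invr_eq0 pnatr_eq0 orbF => /eqP.
Qed.

Lemma Re_scale (c z : C) : c^*%R = c -> c != 0 -> ('Re (c * z) = 0 <-> 'Re z = 0).
Proof.
move=> hc c0.
have -> : 'Re (c * z) = c * 'Re z by rewrite !ReE conjM' hc; ring.
split => [/eqP|->]; last by rewrite mulr0.
by rewrite mulf_eq0 (negbTE c0) => /eqP.
Qed.

Lemma det_Re P Q S : herm P P = 0 -> herm Q Q = 0 -> herm S S = 0 ->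
  (det3 P Q S = 0 <-> 'Re (herm P Q * herm Q S * herm S P) = 0).
Proof.
move=> hP hQ hS.
have key : gram P Q S = herm P Q * herm Q S * herm S P
                        + (herm P Q * herm Q S * herm S P)^*%R.
  rewrite /gram hP hQ hS (hermC P Q) (hermC Q S) (hermC S P) !conjM'; ring.
rewrite ReE0 -key gramE.
split => [->|/eqP]; first by rewrite mul0r oppr0.
by rewrite oppr_eq0 mulf_eq0 conjC_eq0 orbb => /eqP.
Qed.

Lemma cramer1 (d a b D x p q r : C) : d != 0 -> D = 0 ->
  d * x = a * p + b * q + D * r -> x = a / d * p + b / d * q.
Proof. move=> d0 -> e; apply: (mulfI' d0); rewrite e; field; done. Qed.

Lemma cramer P Q S V : det3 P Q V != 0 -> det3 P Q S = 0 ->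
  S = vadd (vscale (det3 S Q V / det3 P Q V) P) (vscale (det3 P S V / det3 P Q V) Q).
Proof.
move=> d0 h0; apply: vec_eq.
- apply: (@cramer1 _ _ _ _ _ _ _ (v1 V) d0 h0); rewrite /det3 /vadd /vscale /v1 /v2 /v3 /=; ring.
- apply: (@cramer1 _ _ _ _ _ _ _ (v2 V) d0 h0); rewrite /det3 /vadd /vscale /v1 /v2 /v3 /=; ring.
- apply: (@cramer1 _ _ _ _ _ _ _ (v3 V) d0 h0); rewrite /det3 /vadd /vscale /v1 /v2 /v3 /=; ring.
Qed.

Lemma span_P P Q (a al be : C) : a != 0 ->
  in_span (vadd P (vscale a Q)) (vadd P (vscale (- a) Q))
          (vadd (vscale al P) (vscale be Q)).
Proof.
move=> a0; exists (al / 2 + be / (2 * a)), (al / 2 - be / (2 * a)).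
have h2 : (2 : C) != 0 by rewrite pnatr_eq0.
apply: vec_eq; rewrite /vadd /vscale /v1 /v2 /v3 /=; field; rewrite ?a0 ?h2 ?mulf_neq0 //.
Qed.

Lemma sig11_PQ P Q : herm P P = 0 -> herm Q Q = 0 -> herm P Q != 0 ->
  sig11_basis (vadd P (vscale (herm P Q) Q)) (vadd P (vscale (- herm P Q) Q)).
Proof.
move=> hP hQ a0.
rewrite /sig11_basis !herm_addl !herm_addr !herm_scalel !herm_scaler hP hQ
  (hermC P Q) ?conjN'.
have pos : 0 < 2 * (herm P Q * (herm P Q)^*%R).
  by rewrite mulr_gt0 ?ltr0n // mul_conjC_gt0.
split; first ring.
split.
  by rewrite (_ : _ + _ = 2 * (herm P Q * (herm P Q)^*%R)) //; ring.
by rewrite (_ : _ + _ = - (2 * (herm P Q * (herm P Q)^*%R))) ?oppr_lt0 //; ring.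
Qed.

Lemma span_of P Q : null_lift P -> null_lift Q -> distinct_pts P Q ->
  exists e1 e2, sig11_basis e1 e2 /\ in_span e1 e2 P /\ in_span e1 e2 Q /\
    forall S, det3 P Q S = 0 -> in_span e1 e2 S.
Proof.
move=> nP nQ hd; have a0 := herm_neq0 nP nQ hd.
case: nP => P0 hP; case: nQ => Q0 hQ.
exists (vadd P (vscale (herm P Q) Q)), (vadd P (vscale (- herm P Q) Q)).
have sp := span_P P Q _ _ a0.
split; first exact: sig11_PQ.
have eP : vadd (vscale 1 P) (vscale 0 Q) = P.
  by apply: vec_eq; rewrite /vadd /vscale /v1 /v2 /v3 /=; ring.
have eQ : vadd (vscale 0 P) (vscale 1 Q) = Q.
  by apply: vec_eq; rewrite /vadd /vscale /v1 /v2 /v3 /=; ring.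
split; first by have := sp 1 0; rewrite eP.
split; first by have := sp 0 1; rewrite eQ.
move=> S hS; have [V hV] := exists_det Q0 hd.
have hV' : det3 P Q V != 0 by rewrite (det_swap12 Q P V) oppr_eq0.
by rewrite (cramer hV' hS); apply: sp.
Qed.

Lemma chain3_iff P Q S : null_lift P -> null_lift Q -> distinct_pts P Q ->
  (on_chain3 P Q S <-> det3 P Q S = 0).
Proof.
move=> nP nQ hd; split.
  by move=> [e1 [e2 [_ [hp [hq hs]]]]]; exact: det_span hp hq hs.
move=> h; have [e1 [e2 [b [hp [hq hS]]]]] := span_of nP nQ hd.
by exists e1, e2; split => //; split => //; split => //; apply: hS.
Qed.

Lemma chain4_of P Q S T : null_lift P -> null_lift Q -> distinct_pts P Q ->
  det3 P Q S = 0 -> det3 P Q T = 0 ->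
  exists e1 e2, sig11_basis e1 e2 /\ in_span e1 e2 P /\ in_span e1 e2 Q /\
    in_span e1 e2 S /\ in_span e1 e2 T.
Proof.
move=> nP nQ hd hS hT; have [e1 [e2 [b [hp [hq h]]]]] := span_of nP nQ hd.
by exists e1, e2; do !split => //; apply: h.
Qed.
End S2.

Ltac nz := do ?[apply/andP; split]; rewrite ?mulf_neq0 //.

Section S3.
Variable R : realType.
Notation C := (R[i]).

Lemma expiN (t : R) : expi (- t) = (expi t)^*%R.
Proof. by rewrite /expi cosN sinN. Qed.

Lemma realr (a b c : C) : c^*%R = c -> b != 0 ->
  (c * (a * a^*%R / (b * b^*%R)))^*%R = c * (a * a^*%R / (b * b^*%R)).
Proof.
move=> hc b0; have b0' : b^*%R != 0 by rewrite conjC_eq0.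
rewrite !(conjM', conjV', conjK') hc.
move: (a^*%R) (b^*%R) b0' => x y y0.
field; nz.
Qed.

Lemma realr2 (a b d e c : C) : c^*%R = c -> b != 0 -> e != 0 ->
  (c * (a * a^*%R * (d * d^*%R) / (b * b^*%R * (e * e^*%R))))^*%R
  = c * (a * a^*%R * (d * d^*%R) / (b * b^*%R * (e * e^*%R))).
Proof.
move=> hc b0 e0; have b0' : b^*%R != 0 by rewrite conjC_eq0.
have e0' : e^*%R != 0 by rewrite conjC_eq0.
rewrite !(conjM', conjV', conjK') hc.
move: (a^*%R) (b^*%R) (d^*%R) (e^*%R) b0' e0' => x y z w y0 w0.
field; nz.
Qed.

Lemma alg_ids (a12 a13 a14 a23 a24 a34 c : C) :
  a12 != 0 -> a13 != 0 -> a14 != 0 -> a23 != 0 -> a24 != 0 -> a34 != 0 ->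
  [/\ ((a13^*%R * a24^*%R / (a14^*%R * a23^*%R))^*%R * (c * (a12 * a23 * a13^*%R))
        = (c * (a13 * a13^*%R / (a14 * a14^*%R))) * (a12 * a24 * a14^*%R)),
      ((a12^*%R * a34^*%R / (a14^*%R * a23))^*%R * (c * (a12 * a23 * a13^*%R)^*%R)
        = (c * (a12 * a12^*%R / (a14 * a14^*%R))) * (a13 * a34 * a14^*%R)) &
      ((a13^*%R * a24^*%R / (a14^*%R * a23^*%R)) *
         (a12^*%R * a34^*%R / (a14^*%R * a23))^*%R * (c * (a12 * a23 * a13^*%R)^*%R)
        = (c * (a13 * a13^*%R * (a12 * a12^*%R) / (a14 * a14^*%R * (a23 * a23^*%R))))
            * (a23 * a34 * a24^*%R))].
Proof.
move=> n12 n13 n14 n23 n24 n34.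
have n12' : a12^*%R != 0 by rewrite conjC_eq0.
have n13' : a13^*%R != 0 by rewrite conjC_eq0.
have n14' : a14^*%R != 0 by rewrite conjC_eq0.
have n23' : a23^*%R != 0 by rewrite conjC_eq0.
have n24' : a24^*%R != 0 by rewrite conjC_eq0.
have n34' : a34^*%R != 0 by rewrite conjC_eq0.
split; rewrite !(conjM', conjV', conjK');
  move: (a12^*%R) (a13^*%R) (a14^*%R) (a23^*%R) (a24^*%R) (a34^*%R) n12' n13' n14' n23' n24' n34'
    => b12 b13 b14 b23 b24 b34 m12 m13 m14 m23 m24 m34;
  field; nz.
Qed.
End S3.

Unset Implicit Arguments.

Theorem proposition3p3 (R : realType) (P1 P2 P3 P4 : vec3 R) (A : R) :
  null_lift P1 -> null_lift P2 -> null_lift P3 -> null_lift P4 ->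
  distinct_pts P1 P2 -> distinct_pts P1 P3 -> distinct_pts P1 P4 ->
  distinct_pts P2 P3 -> distinct_pts P2 P4 -> distinct_pts P3 P4 ->
  cartanA_is P1 P2 P3 A ->
  let X1 := crossX P1 P2 P3 P4 in
  let X2 := crossX P1 P3 P2 P4 in
  ((on_chain3 P1 P2 P3 \/ on_chain3 P1 P2 P4 \/ on_chain3 P1 P3 P4 \/ on_chain3 P2 P3 P4)
     <-> (S123 X1 X2 A \/ S124 X1 X2 A \/ S134 X1 X2 A \/ S234 X1 X2 A))
  /\
  (on_chain4 P1 P2 P3 P4
     <-> ((S123 X1 X2 A /\ S124 X1 X2 A) \/ (S123 X1 X2 A /\ S134 X1 X2 A) \/
          (S123 X1 X2 A /\ S234 X1 X2 A) \/ (S124 X1 X2 A /\ S134 X1 X2 A) \/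
          (S124 X1 X2 A /\ S234 X1 X2 A) \/ (S134 X1 X2 A /\ S234 X1 X2 A))).
Proof.
move=> n1 n2 n3 n4 d12 d13 d14 d23 d24 d34 hA X1 X2.
have [_ h1] := n1; have [_ h2] := n2; have [_ h3] := n3; have [_ h4] := n4.
have b12 := herm_neq0 n1 n2 d12; have b13 := herm_neq0 n1 n3 d13.
have b14 := herm_neq0 n1 n4 d14; have b23 := herm_neq0 n2 n3 d23.
have b24 := herm_neq0 n2 n4 d24; have b34 := herm_neq0 n3 n4 d34.
have C123 : on_chain3 P1 P2 P3 <-> det3 P1 P2 P3 = 0 by exact: chain3_iff.
have C124 : on_chain3 P1 P2 P4 <-> det3 P1 P2 P4 = 0 by exact: chain3_iff.
have C134 : on_chain3 P1 P3 P4 <-> det3 P1 P3 P4 = 0 by exact: chain3_iff.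
have C234 : on_chain3 P2 P3 P4 <-> det3 P2 P3 P4 = 0 by exact: chain3_iff.
have D123 := det_Re h1 h2 h3; have D124 := det_Re h1 h2 h4.
have D134 := det_Re h1 h3 h4; have D234 := det_Re h2 h3 h4.
rewrite (hermC P1 P3) in D123; rewrite (hermC P1 P4) in D124.
rewrite (hermC P1 P4) in D134; rewrite (hermC P2 P4) in D234.
move: hA; rewrite /cartanA_is /is_arg (hermC P1 P3).
set T := herm P1 P2 * herm P2 P3 * (herm P1 P3)^*%R => hA.
have T0 : T != 0 by rewrite /T !mulf_neq0 // conjC_eq0.
set n := `|- T|.
have n0 : n != 0 by rewrite /n normr_eq0 oppr_eq0.
have hn : n^*%R = n by rewrite /n conj_normC.
set c0 := - n^-1.
have hc0 : c0^*%R = c0 by rewrite /c0 conjN' conjV' hn.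
have c00 : c0 != 0 by rewrite /c0 oppr_eq0 invr_eq0.
have hu : expi A = c0 * T.
  apply: (mulfI' n0); rewrite -hA /c0; field; nz.
have hu' : expi (- A) = c0 * T^*%R by rewrite expiN hu conjM' hc0.
have eX1 : X1 = (herm P1 P3)^*%R * (herm P2 P4)^*%R / ((herm P1 P4)^*%R * (herm P2 P3)^*%R).
  by rewrite /X1 /crossX (hermC P1 P3) (hermC P2 P4) (hermC P1 P4) (hermC P2 P3).
have eX2 : X2 = (herm P1 P2)^*%R * (herm P3 P4)^*%R / ((herm P1 P4)^*%R * herm P2 P3).
  by rewrite /X2 /crossX (hermC P1 P2) (hermC P3 P4) (hermC P1 P4).
have [i1 i2 i3] := alg_ids c0 b12 b13 b14 b23 b24 b34.
have S123E : S123 X1 X2 A <-> det3 P1 P2 P3 = 0.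
  rewrite D123 /S123 hu; exact: Re_scale.
have S124E : S124 X1 X2 A <-> det3 P1 P2 P4 = 0.
  rewrite D124 /S124 eX1 hu /T i1; apply: Re_scale; first exact: realr.
  by rewrite !mulf_neq0 // ?invr_eq0 ?mulf_neq0 // conjC_eq0.
have S134E : S134 X1 X2 A <-> det3 P1 P3 P4 = 0.
  rewrite D134 /S134 eX2 hu' /T i2; apply: Re_scale; first exact: realr.
  by rewrite !mulf_neq0 // ?invr_eq0 ?mulf_neq0 // conjC_eq0.
have S234E : S234 X1 X2 A <-> det3 P2 P3 P4 = 0.
  rewrite D234 /S234 eX1 eX2 hu' /T i3; apply: Re_scale; first exact: realr2.
  by rewrite !mulf_neq0 // ?invr_eq0 ?mulf_neq0 // conjC_eq0.
split.
  by move: C123 C124 C134 C234 S123E S124E S134E S234E; tauto.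
split.
  move=> [e1 [e2 [hb [p1 [p2 [p3 p4]]]]]].
  have := det_span p1 p2 p3; have := det_span p1 p2 p4.
  by move: S123E S124E; tauto.
rewrite S123E S124E S134E S234E.
case=> [[x y]|[[x y]|[[x y]|[[x y]|[[x y]|[x y]]]]]].
- have [e1 [e2 H]] := chain4_of n1 n2 d12 x y; exists e1, e2; tauto.
- have x' : det3 P1 P3 P2 = 0 by rewrite det_swap23 x oppr0.
  have [e1 [e2 H]] := chain4_of n1 n3 d13 x' y; exists e1, e2; tauto.
- have x' : det3 P2 P3 P1 = 0 by rewrite det_cyc x.
  have [e1 [e2 H]] := chain4_of n2 n3 d23 x' y; exists e1, e2; tauto.
- have x' : det3 P1 P4 P2 = 0 by rewrite det_swap23 x oppr0.
  have y' : det3 P1 P4 P3 = 0 by rewrite det_swap23 y oppr0.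
  have [e1 [e2 H]] := chain4_of n1 n4 d14 x' y'; exists e1, e2; tauto.
- have x' : det3 P2 P4 P1 = 0 by rewrite det_cyc x.
  have y' : det3 P2 P4 P3 = 0 by rewrite det_swap23 y oppr0.
  have [e1 [e2 H]] := chain4_of n2 n4 d24 x' y'; exists e1, e2; tauto.
- have x' : det3 P3 P4 P1 = 0 by rewrite det_cyc x.
  have y' : det3 P3 P4 P2 = 0 by rewrite det_cyc y.
  have [e1 [e2 H]] := chain4_of n3 n4 d34 x' y'; exists e1, e2; tauto.
Qed.
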